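(* Assume (A.1)–(A.3). For every $z>0$ and every $\overline{s}\ge 0$, the system of equations $$\delta=\tfrac{1}{L}\mathrm{Tr}\big[\mathbf R_1\big(z\mathbf I_N+(\overline{s}\,\overline{\omega}+\gamma\underline{\omega})\mathbf R_1\big)^{-1}\big],\qquad \overline{\omega}=\tfrac1L\mathrm{Tr}\big[\mathbf T_1(\mathbf I_L+\overline{s}\delta\mathbf T_1+\delta\gamma\mathbf R_2\mathbf T_1)^{-1}\big],$$ $$\underline{\omega}=\tfrac1L\mathrm{Tr}\big[\mathbf R_2\mathbf T_1(\mathbf I_L+\overline{s}\delta\mathbf T_1+\delta\gamma\mathbf R_2\mathbf T_1)^{-1}\big],\qquad \gamma=\tfrac1M\mathrm{Tr}\big[\mathbf T_2(\mathbf I_M+\tfrac LM\delta\underline{\omega}\mathbf T_2)^{-1}\big]$$ admits a unique solution $(\delta,\overline{\omega},\underline{\omega},\gamma)\in(0,\infty)^4$.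
   Context: $N,L,M$ are positive integers with $L=L(N)$, $M=M(N)$. $\mathbf R_1\in\mathbb C^{N\times N}$, $\mathbf R_2,\mathbf T_1\in\mathbb C^{L\times L}$, $\mathbf T_2\in\mathbb C^{M\times M}$ are deterministic Hermitian positive semidefinite matrices. Assumptions: (A.1) $0\le\liminf_N M/N\le\limsup_N M/N<\infty$ and $0<\liminf_N L/N\le\limsup_N L/N<\infty$; (A.2) $\sup_{N\ge1}\max\{\|\mathbf R_1\|,\|\mathbf R_2\|,\|\mathbf T_1\|,\|\mathbf T_2\|\}\le r<\infty$ (spectral norm); (A.3) $\inf_{N\ge1}\min\{\frac1L\mathrm{Tr}(\mathbf R_2\mathbf T_1),\frac1N\mathrm{Tr}\mathbf R_1,\frac1L\mathrm{Tr}\mathbf R_2,\frac1L\mathrm{Tr}\mathbf T_1,\frac1M\mathrm{Tr}\mathbf T_2\}\ge l>0$. *)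

(* Defs.v *)
From HB Require Import structures.
From mathcomp Require Import all_boot all_order all_algebra.
From mathcomp Require Import all_classical all_reals.
From mathcomp.real_closed Require Import complex.
Set Implicit Arguments. Unset Strict Implicit. Unset Printing Implicit Defensive.
Import Order.TTheory GRing.Theory Num.Theory.
Local Open Scope ring_scope.
Local Open Scope classical_set_scope.

Definition adjmx (R : rcfType) (m n : nat) (A : 'M[R[i]]_(m, n)) : 'M[R[i]]_(n, m) :=
  \matrix_(i < n, j < m) (A j i)^*.

Definition hermitian_psd (R : rcfType) (n : nat) (A : 'M[R[i]]_n) : Prop :=
  adjmx A = A /\ forall x : 'cV[R[i]]_n, 0 <= (adjmx x *m A *m x) 0 0.

Definition vnorm (R : rcfType) (n : nat) (x : 'cV[R[i]]_n) : R :=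
  Num.sqrt (complex.Re ((adjmx x *m x) 0 0)).

Definition specnorm (R : realType) (m n : nat) (A : 'M[R[i]]_(m, n)) : R :=
  sup [set vnorm (A *m x) | x in [set x : 'cV[R[i]]_n | vnorm x <= 1]].

Local Open Scope complex_scope.

Definition is_solution (R : realType) (N L M : nat)
  (R1 : 'M[R[i]]_N) (R2 T1 : 'M[R[i]]_L) (T2 : 'M[R[i]]_M)
  (z s delta omb omu gam : R) : Prop :=
  let Q := invmx (1%:M + (s * delta)%:C *: T1 + (delta * gam)%:C *: (R2 *m T1)) in
  [/\ delta%:C = (L%:R)^-1 * \tr (R1 *m invmx (z%:C%:M + (s * omb + gam * omu)%:C *: R1)),
      omb%:C = (L%:R)^-1 * \tr (T1 *m Q),
      omu%:C = (L%:R)^-1 * \tr (R2 *m T1 *m Q)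
    & gam%:C = (M%:R)^-1 * \tr (T2 *m invmx (1%:M + ((L%:R / M%:R) * delta * omu)%:C *: T2))].

(* Main.v *)
Require Import Defs.
From HB Require Import structures.
From mathcomp Require Import all_boot all_order all_algebra.
From mathcomp Require Import all_classical all_reals.
From mathcomp.real_closed Require Import complex.
From mathcomp Require Import sesquilinear spectral ring lra.
Import Order.TTheory GRing.Theory Num.Theory.
Set Implicit Arguments. Unset Strict Implicit. Unset Printing Implicit Defensive.
Local Open Scope ring_scope.
Local Open Scope sesquilinear_scope.
Section Gen.
Variable C : numClosedFieldType.

Definition qf n (A : 'M[C]_n) (x : 'cV[C]_n) : C := (x^t* *m A *m x) 0 0.
Definition herm n (A : 'M[C]_n) := A^t* = A.
Definition nneg n (A : 'M[C]_n) := forall x, 0 <= qf A x.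
Definition psd n (A : 'M[C]_n) := herm A /\ nneg A.
Definition pdef n (A : 'M[C]_n) := forall x, x != 0 -> 0 < qf A x.
Definition sp n (U : 'M[C]_n) (e : 'rV[C]_n) := U^t* *m diag_mx e *m U.

Lemma adj_mul m n p (A : 'M[C]_(m, n)) (B : 'M[C]_(n, p)) : (A *m B)^t* = B^t* *m A^t*.
Proof. by rewrite trmx_mul map_mxM. Qed.

Lemma unitary_tK n (U : 'M[C]_n) : U \is unitarymx -> U^t* *m U = 1%:M.
Proof. by move=> uU; have := mulmxKtV 1%:M uU erefl; rewrite mul1mx. Qed.

Lemma inv_eq n (X Y : 'M[C]_n) : X *m Y = 1%:M -> invmx X = Y.
Proof.
move=> h; have [uX _] := mulmx1_unit h.
by rewrite -[RHS](mulKmx uX) h mulmx1.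
Qed.

Lemma diag_mxM n (e f : 'rV[C]_n) :
  diag_mx e *m diag_mx f = diag_mx (\row_i (e 0 i * f 0 i)).
Proof.
apply/matrixP => i j; rewrite mul_diag_mx !mxE.
by case: eqP => [->|_]; rewrite ?mulr1n ?mulr0n ?mulr0.
Qed.

Lemma spM n (U : 'M[C]_n) (e f : 'rV[C]_n) : U \is unitarymx ->
  sp U e *m sp U f = sp U (\row_i (e 0 i * f 0 i)).
Proof.
move=> uU; rewrite /sp -!mulmxA (mulmxA U) (unitarymxP uU) mul1mx.
by rewrite (mulmxA (diag_mx e)) diag_mxM.
Qed.

Lemma spD n (U : 'M[C]_n) (e f : 'rV[C]_n) : sp U e + sp U f = sp U (e + f).
Proof.
rewrite /sp -mulmxDl -mulmxDr; congr (_ *m _ *m _).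
by apply/matrixP => i j; rewrite !mxE; case: eqP; rewrite ?mulr1n ?mulr0n ?addr0.
Qed.

Lemma spZ n (U : 'M[C]_n) a (e : 'rV[C]_n) : a *: sp U e = sp U (a *: e).
Proof.
rewrite /sp scalemxAl scalemxAr; congr (_ *m _ *m _).
by apply/matrixP => i j; rewrite !mxE; case: eqP; rewrite ?mulr1n ?mulr0n ?mulr0.
Qed.

Lemma sp_scalar n (U : 'M[C]_n) a : U \is unitarymx -> a%:M = sp U (const_mx a).
Proof.
move=> uU; rewrite /sp.
have -> : diag_mx (const_mx a) = a%:M :> 'M[C]_n.
  by apply/matrixP => i j; rewrite !mxE.
by rewrite mul_mx_scalar -scalemxAl unitary_tK // scalemx1.
Qed.

Lemma tr_sp n (U : 'M[C]_n) (e : 'rV[C]_n) : U \is unitarymx -> \tr (sp U e) = \sum_i e 0 i.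
Proof.
move=> uU; rewrite /sp mxtrace_mulC mulmxA (unitarymxP uU) mul1mx.
exact: mxtrace_diag.
Qed.

Lemma sp_inv n (U : 'M[C]_n) (e : 'rV[C]_n) : U \is unitarymx -> (forall i, e 0 i != 0) ->
  sp U e \in unitmx /\ invmx (sp U e) = sp U (\row_i (e 0 i)^-1).
Proof.
move=> uU ne.
have h : sp U e *m sp U (\row_i (e 0 i)^-1) = 1%:M.
  rewrite spM // (sp_scalar 1 uU); congr sp.
  by apply/matrixP => i j; rewrite !mxE mulfV.
by split; [case: (mulmx1_unit h) | exact: inv_eq].
Qed.

Lemma qf_sp n (U : 'M[C]_n) (e : 'rV[C]_n) x :
  qf (sp U e) x = \sum_i e 0 i * ((U *m x) i 0 * ((U *m x) i 0)^*).
Proof.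
rewrite /qf /sp -!mulmxA mulmxA -adj_mul mul_diag_mx mxE.
apply: eq_bigr => i _; rewrite !mxE.
by rewrite mulrCA [X in _ * X]mulrC.
Qed.

Lemma qf_col n (U P : 'M[C]_n) i : (U *m P *m U^t*) i i = qf P (col i (U^t*)).
Proof.
rewrite /qf !mxE; apply: eq_bigr => k _; rewrite !mxE; congr (_ * _).
by apply: eq_bigr => j _; rewrite !mxE conjCK.
Qed.

Lemma herm_sp n (U : 'M[C]_n) (e : 'rV[C]_n) : (forall i, e 0 i \is Num.real) -> herm (sp U e).
Proof.
move=> re; rewrite /herm /sp !adj_mul trmxCK mulmxA; congr (_ *m _ *m _).
apply/matrixP => i j; rewrite !mxE.
case: (eqVneq i j) => [->|nij]; first by rewrite !mulr1n conj_Creal.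
by rewrite !mulr0n conjC0.
Qed.

Lemma psd_sp n (U : 'M[C]_n) (e : 'rV[C]_n) : U \is unitarymx ->
  (forall i, 0 <= e 0 i) -> psd (sp U e).
Proof.
move=> uU e0; split; first by apply: herm_sp => i; exact: ger0_real.
move=> x; rewrite qf_sp; apply: sumr_ge0 => i _.
by apply: mulr_ge0 => //; exact: mul_conjC_ge0.
Qed.

Lemma unitary_mul_neq0 n (U : 'M[C]_n) (x : 'cV[C]_n) : U \is unitarymx ->
  x != 0 -> U *m x != 0.
Proof.
move=> uU; apply: contraNneq => h.
by rewrite -(mul1mx x) -(unitary_tK uU) -mulmxA h mulmx0.
Qed.

Lemma pdef_sp n (U : 'M[C]_n) (e : 'rV[C]_n) : U \is unitarymx ->
  (forall i, 0 < e 0 i) -> pdef (sp U e).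
Proof.
move=> uU e0 x x0; rewrite qf_sp.
have /cV0Pn [i hi] := unitary_mul_neq0 uU x0.
rewrite (bigD1 i) //=; apply: ltr_wpDr.
  apply: sumr_ge0 => k _; apply: mulr_ge0; last exact: mul_conjC_ge0.
  exact: ltW.
by apply: mulr_gt0 => //; rewrite mul_conjC_gt0.
Qed.

Lemma pdef_nneg n (A : 'M[C]_n) : pdef A -> nneg A.
Proof.
move=> h x; case: (eqVneq x 0) => [->|/h/ltW //].
by rewrite /qf mulmx0 mxE.
Qed.

Lemma herm_spec n (A : 'M[C]_n) : herm A -> A = sp (spectralmx A) (spectral_diag A).
Proof.
move=> hA.
have hs : A \is hermsymmx by apply/is_hermitianmxP; rewrite expr0 scale1r hA.
move: (hermitian_normalmx hs) => /orthomx_spectralP e.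
by rewrite {1}e invmx_unitary ?spectral_unitarymx.
Qed.

Lemma spec_conj n (U : 'M[C]_n) (e : 'rV[C]_n) : U \is unitarymx -> U *m sp U e *m U^t* = diag_mx e.
Proof.
move=> uU; rewrite /sp !mulmxA (unitarymxP uU) mul1mx -mulmxA (unitarymxP uU).
by rewrite mulmx1.
Qed.

Lemma psd_spec n (A : 'M[C]_n) : psd A ->
  A = sp (spectralmx A) (spectral_diag A) /\ forall i, 0 <= spectral_diag A 0 i.
Proof.
move=> [hA nA]; have eA := herm_spec hA; split => // i.
have := spec_conj (spectral_diag A) (spectral_unitarymx A).
rewrite -eA => /matrixP /(_ i i); rewrite qf_col mxE eqxx mulr1n => <-.
exact: nA.
Qed.

Lemma tr_spP n (U : 'M[C]_n) (e : 'rV[C]_n) P : U \is unitarymx ->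
  \tr (sp U e *m P) = \sum_i e 0 i * qf P (col i (U^t*)).
Proof.
move=> uU; rewrite /sp -!mulmxA mxtrace_mulC -!mulmxA.
rewrite /mxtrace; apply: eq_bigr => i _.
by rewrite mul_diag_mx mxE -qf_col !mulmxA.
Qed.

Lemma tr_psd n (K P : 'M[C]_n) : psd K -> nneg P -> 0 <= \tr (K *m P).
Proof.
move=> hK hP; have [eK e0] := psd_spec hK.
rewrite eK tr_spP ?spectral_unitarymx //.
by apply: sumr_ge0 => i _; apply: mulr_ge0.
Qed.

Lemma col_unitary_neq0 n (U : 'M[C]_n) i : U \is unitarymx -> col i (U^t*) != 0.
Proof.
move=> uU; apply/negP => /eqP h.
have := unitarymxP uU => /matrixP /(_ i i); rewrite !mxE eqxx mulr1n.
move/esym/eqP; rewrite big1 ?oner_eq0 // => k _.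
have := congr1 (fun M : 'cV[C]_n => M k 0) h; rewrite !mxE => ->.
by rewrite mulr0.
Qed.

Lemma tr_psd_gt0 n (K P : 'M[C]_n) : psd K -> 0 < \tr K -> pdef P -> 0 < \tr (K *m P).
Proof.
move=> hK trK hP; have [eK e0] := psd_spec hK.
have uU := spectral_unitarymx K.
have : \sum_i spectral_diag K 0 i != 0.
  by rewrite -(tr_sp _ uU) -eK gt_eqF.
move=> /eqP /psumr_neq0P; case=> [i _|i /andP [_ ei]]; first exact: e0.
rewrite eK tr_spP // (bigD1 i) //=; apply: ltr_wpDr.
  apply: sumr_ge0 => k _; apply: mulr_ge0 => //; exact: pdef_nneg.
by apply: mulr_gt0 => //; apply: hP; exact: col_unitary_neq0.
Qed.

Lemma adjB n (A B : 'M[C]_n) : (A - B)^t* = A^t* - B^t*.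
Proof. by apply/matrixP => i j; rewrite !mxE rmorphB. Qed.

Lemma adjD n (A B : 'M[C]_n) : (A + B)^t* = A^t* + B^t*.
Proof. by apply/matrixP => i j; rewrite !mxE rmorphD. Qed.

Lemma adjZ n a (A : 'M[C]_n) : (a *: A)^t* = a^* *: A^t*.
Proof. by apply/matrixP => i j; rewrite !mxE rmorphM. Qed.

Lemma adj_scalar n a : (a%:M : 'M[C]_n)^t* = (a^*)%:M.
Proof.
apply/matrixP => i j; rewrite !mxE eq_sym.
by case: eqP; rewrite ?mulr1n ?mulr0n ?conjC0.
Qed.

Lemma qf_add n (A B : 'M[C]_n) x : qf (A + B) x = qf A x + qf B x.
Proof. by rewrite /qf mulmxDr mulmxDl mxE. Qed.

Lemma qf_scale n a (A : 'M[C]_n) x : qf (a *: A) x = a * qf A x.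
Proof. by rewrite /qf -scalemxAr -scalemxAl mxE. Qed.

Lemma qf_congr n (X P : 'M[C]_n) x : herm X -> qf (X *m P *m X) x = qf P (X *m x).
Proof. by move=> hX; rewrite /qf adj_mul hX !mulmxA. Qed.

Lemma herm_inv n (A : 'M[C]_n) : herm A -> herm (invmx A).
Proof. by move=> hA; rewrite /herm trmx_inv map_invmx hA. Qed.

Lemma psd_add n (A B : 'M[C]_n) : psd A -> psd B -> psd (A + B).
Proof.
move=> [hA nA] [hB nB]; split; first by rewrite /herm adjD hA hB.
by move=> x; rewrite qf_add addr_ge0.
Qed.

Lemma psd_scale n a (A : 'M[C]_n) : 0 <= a -> psd A -> psd (a *: A).
Proof.
move=> a0 [hA nA]; split; first by rewrite /herm adjZ hA conj_Creal ?ger0_real.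
by move=> x; rewrite qf_scale mulr_ge0.
Qed.

Lemma psd_congr n (X P : 'M[C]_n) : herm X -> psd P -> psd (X *m P *m X).
Proof.
move=> hX [hP nP]; split; first by rewrite /herm !adj_mul hX hP mulmxA.
by move=> x; rewrite qf_congr.
Qed.

Lemma psd0 n : psd (0 : 'M[C]_n).
Proof. by split; [rewrite /herm; apply/matrixP => i j; rewrite !mxE conjC0 | move=> x; rewrite /qf mulmx0 mul0mx mxE]. Qed.

Lemma inv_cG n (c : C) (G : 'M[C]_n) : 0 < c -> psd G ->
  c%:M + G \in unitmx /\ psd (invmx (c%:M + G)) /\ pdef (invmx (c%:M + G)).
Proof.
move=> c0 hG; have [eG e0] := psd_spec hG.
set U := spectralmx G in eG; set e := spectral_diag G in eG e0.
have uU : U \is unitarymx by exact: spectral_unitarymx.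
have -> : c%:M + G = sp U (const_mx c + e) by rewrite eG (sp_scalar c uU) spD.
have pos i : 0 < (const_mx c + e) 0 i by rewrite !mxE ltr_wpDr.
have [u ->] := sp_inv uU (fun i => lt0r_neq0 (pos i)).
have pos' i : 0 < (\row_i ((const_mx c + e) 0 i)^-1) 0 i by rewrite mxE invr_gt0.
split=> //; split; [apply: psd_sp => // i | apply: pdef_sp => // i].
exact: ltW.
Qed.

Lemma herm_cG n (c : C) (G : 'M[C]_n) : 0 <= c -> psd G -> herm (c%:M + G).
Proof.
move=> c0 [hG _]; rewrite /herm adjD hG adj_scalar conj_Creal //; exact: ger0_real.
Qed.

Lemma inv_diff n (A B : 'M[C]_n) : A \in unitmx -> B \in unitmx ->
  invmx A - invmx B = invmx B *m ((B - A) + (B - A) *m invmx A *m (B - A)) *m invmx B.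
Proof.
move=> uA uB.
have -> : (B - A) + (B - A) *m invmx A *m (B - A) = B *m invmx A *m B - B.
  rewrite [(B - A) *m invmx A]mulmxBl (mulmxV uA) mulmxBl mul1mx mulmxBr.
  rewrite -[B *m invmx A *m A]mulmxA (mulVmx uA) mulmx1.
  by rewrite addrC subrK.
rewrite mulmxBr mulmxBl !mulmxA (mulVmx uB) mul1mx.
by rewrite -mulmxA (mulmxV uB) mulmx1 mul1mx.
Qed.

Lemma loewner n (A B K : 'M[C]_n) : A \in unitmx -> B \in unitmx -> herm A -> herm B ->
  nneg (invmx A) -> nneg (B - A) -> psd K -> \tr (K *m invmx B) <= \tr (K *m invmx A).
Proof.
move=> uA uB hA hB nAi nD hK; rewrite -subr_ge0 -raddfB /= -mulmxBr.
apply: tr_psd => //; rewrite inv_diff // => x.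
have hD : herm (B - A) by rewrite /herm adjB hA hB.
rewrite qf_congr; last exact: herm_inv.
by rewrite qf_add qf_congr // addr_ge0.
Qed.

Lemma mono n (c c' : C) (G G' K : 'M[C]_n) : 0 < c -> 0 < c' -> psd G -> psd G' ->
  nneg ((c'%:M + G') - (c%:M + G)) -> psd K ->
  \tr (K *m invmx (c'%:M + G')) <= \tr (K *m invmx (c%:M + G)).
Proof.
move=> c0 c'0 hG hG' nD hK.
have [uA [[_ nA] _]] := inv_cG c0 hG; have [uB _] := inv_cG c'0 hG'.
apply: loewner => //; apply: herm_cG => //; exact: ltW.
Qed.



Definition msqrt n (T : 'M[C]_n) := sp (spectralmx T) (\row_i sqrtC (spectral_diag T 0 i)).

Lemma msqrtP n (T : 'M[C]_n) : psd T -> psd (msqrt T) /\ msqrt T *m msqrt T = T.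
Proof.
move=> hT; have [eT e0] := psd_spec hT.
have uU := spectral_unitarymx T.
rewrite /msqrt; split.
  by apply: psd_sp => // i; rewrite mxE sqrtC_ge0.
rewrite spM // [in RHS]eT; congr sp; apply/matrixP => i j.
by rewrite !mxE ord1 -expr2 sqrtCK.
Qed.

Lemma one_sub_inv n (Q Z : 'M[C]_n) : Z + Q *m Z = Q -> (1%:M + Q) *m (1%:M - Z) = 1%:M.
Proof.
move=> h; have hz : Q *m Z = Q - Z by apply: (addrI Z); rewrite h addrC subrK.
rewrite mulmxDl mul1mx mulmxBr mulmx1 hz.
by rewrite opprB [Q + _]addrC subrK subrK.
Qed.

Lemma transfer n (Bm P : 'M[C]_n) : 1%:M + Bm *m P *m Bm \in unitmx ->
  1%:M + P *m (Bm *m Bm) \in unitmx /\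
  (Bm *m Bm) *m invmx (1%:M + P *m (Bm *m Bm)) = Bm *m invmx (1%:M + Bm *m P *m Bm) *m Bm.
Proof.
move=> u; set W := invmx (1%:M + Bm *m P *m Bm).
have hW : W + Bm *m P *m Bm *m W = 1%:M.
  by rewrite -[W in W + _]mul1mx -mulmxDl /W mulmxV.
have key : P *m Bm *m W *m Bm + P *m (Bm *m Bm) *m (P *m Bm *m W *m Bm) = P *m (Bm *m Bm).
  have -> : P *m (Bm *m Bm) *m (P *m Bm *m W *m Bm) = P *m Bm *m (Bm *m P *m Bm *m W) *m Bm.
    by rewrite !mulmxA.
  by rewrite -mulmxDl -mulmxDr hW mulmx1 mulmxA.
have h1 := one_sub_inv key.
have [u1 _] := mulmx1_unit h1; split => //; rewrite (inv_eq h1).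
rewrite mulmxBr mulmx1.
have eW : W = 1%:M - Bm *m P *m Bm *m W by rewrite -hW addrK.
rewrite [in RHS]eW mulmxBr mulmx1 mulmxBl !mulmxA.
by [].
Qed.

Lemma tr_res n (K : 'M[C]_n) (c a : C) : psd K -> 0 < c -> 0 <= a ->
  \tr (K *m invmx (c%:M + a *: K)) =
  \sum_i spectral_diag K 0 i / (c + a * spectral_diag K 0 i).
Proof.
move=> hK c0 a0; have [eK e0] := psd_spec hK.
set U := spectralmx K in eK; set e := spectral_diag K in eK e0 *.
have uU : U \is unitarymx by exact: spectral_unitarymx.
have -> : c%:M + a *: K = sp U (const_mx c + a *: e) by rewrite eK (sp_scalar c uU) spZ spD.
have pos i : 0 < (const_mx c + a *: e) 0 i by rewrite !mxE ltr_wpDr // mulr_ge0.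
have [_ ->] := sp_inv uU (fun i => lt0r_neq0 (pos i)).
rewrite {1}eK spM // tr_sp //; apply: eq_bigr => i _; rewrite !mxE.
by [].
Qed.

Lemma tr_spec n (K : 'M[C]_n) : psd K -> \tr K = \sum_i spectral_diag K 0 i.
Proof.
move=> hK; have [eK _] := psd_spec hK.
by rewrite {1}eK tr_sp // spectral_unitarymx.
Qed.

Lemma inv_scale n (d : C) (H : 'M[C]_n) : d != 0 -> 1%:M + d *: H \in unitmx ->
  d *: invmx (1%:M + d *: H) = invmx (d^-1%:M + H).
Proof.
move=> d0 u; apply/esym/inv_eq.
by rewrite -scalemxAr scalemxAl scalerDr scale_scalar_mx mulfV // mulmxV.
Qed.

Lemma psd1 n : psd (1%:M : 'M[C]_n).
Proof.
have u1 : (1%:M : 'M[C]_n) \is unitarymx by apply/unitarymxP; rewrite trmx1 map_mx1 mulmx1.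
by rewrite (sp_scalar 1 u1); apply: psd_sp => // i; rewrite mxE ler01.
Qed.

Lemma nneg_scalar n (a : C) : 0 <= a -> nneg (a%:M : 'M[C]_n).
Proof. by move=> a0; have [] := psd_scale a0 (psd1 n); rewrite scalemx1. Qed.

Lemma tr_cyc n (A B X : 'M[C]_n) : \tr (A *m (B *m X *m B)) = \tr (B *m A *m B *m X).
Proof. by rewrite !mulmxA mxtrace_mulC !mulmxA. Qed.

Lemma tr_cyc2 n (B X : 'M[C]_n) : \tr (B *m X *m B) = \tr (B *m B *m X).
Proof. by rewrite mxtrace_mulC mulmxA. Qed.

End Gen.
Section Scal.
Variable R : realFieldType.
Variables (n : nat) (lam : 'I_n -> R).
Hypothesis lam0 : forall i, 0 <= lam i.
Hypothesis lampos : exists i, 0 < lam i.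

Definition hs (c a : R) := \sum_i lam i / (c + a * lam i).

Lemma hs_pos c a : 0 < c -> 0 <= a -> 0 < hs c a.
Proof.
move=> c0 a0; have [i li] := lampos; rewrite /hs (bigD1 i) //=.
apply: ltr_wpDr.
  apply: sumr_ge0 => j _; apply: divr_ge0 => //.
  by apply: addr_ge0; [exact: ltW | exact: mulr_ge0].
by apply: divr_gt0 => //; apply: ltr_wpDr => //; exact: mulr_ge0.
Qed.

Lemma hs_mono c a a' : 0 < c -> 0 <= a -> a <= a' -> hs c a' <= hs c a.
Proof.
move=> c0 a0 aa; apply: ler_sum => i _.
have l0 := lam0 i.
have p1 : 0 < c + a * lam i by apply: ltr_wpDr => //; exact: mulr_ge0.
have p2 : 0 < c + a' * lam i by apply: ltr_wpDr => //; apply: mulr_ge0 => //; exact: le_trans aa.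
have e : lam i / (c + a * lam i) - lam i / (c + a' * lam i) =
   lam i * ((a' - a) * lam i) / ((c + a * lam i) * (c + a' * lam i)).
  by field; rewrite !gt_eqF.
rewrite -subr_ge0 e; apply: divr_ge0; last exact: mulr_ge0 (ltW p1) (ltW p2).
by apply: mulr_ge0 => //; apply: mulr_ge0 => //; rewrite subr_ge0.
Qed.

Lemma hs_scal1 c a al : 0 < c -> 0 <= a -> 1 < al -> hs c (a / al) < al * hs c a.
Proof.
move=> c0 a0 al1; have [i li] := lampos; rewrite /hs mulr_sumr.
have al0 : 0 < al by lra.
have t j : 0 <= al * (lam j / (c + a * lam j)) - lam j / (c + a / al * lam j) /\
           (0 < lam j -> 0 < al * (lam j / (c + a * lam j)) - lam j / (c + a / al * lam j)).
  have l0 := lam0 j.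
  have ai : 0 <= a / al by exact: divr_ge0 (ltW al0).
  have p1 : 0 < c + a * lam j by apply: ltr_wpDr => //; exact: mulr_ge0.
  have p2 : 0 < c + a / al * lam j by apply: ltr_wpDr => //; exact: mulr_ge0.
  have e : al * (lam j / (c + a * lam j)) - lam j / (c + a / al * lam j) =
     lam j * ((al - 1) * c) / ((c + a * lam j) * (c + a / al * lam j)).
    have q : 0 < c * al + a * lam j by apply: ltr_wpDr; [exact: mulr_ge0 | exact: mulr_gt0].
    by field; rewrite (gt_eqF al0) (gt_eqF q) (gt_eqF p1).
  have d0 : 0 < (c + a * lam j) * (c + a / al * lam j) by exact: mulr_gt0.
  have c1 : 0 < (al - 1) * c by apply: mulr_gt0 => //; lra.
  rewrite e; split; [|move=> lj]; [apply: divr_ge0 | apply: divr_gt0] => //.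
  - by apply: mulr_ge0 => //; exact: ltW.
  - exact: ltW.
  - exact: mulr_gt0.
rewrite -subr_gt0 -sumrB (bigD1 i) //=.
apply: ltr_wpDr; first by apply: sumr_ge0 => j _; exact: (t j).1.
exact: (t i).2.
Qed.

Lemma hs_scal2 c a al : 0 < c -> 0 <= a -> 1 < al -> hs c a < al * hs c (al * a).
Proof.
move=> c0 a0 al1; have [i li] := lampos; rewrite /hs mulr_sumr.
have al0 : 0 < al by lra.
have t j : 0 <= al * (lam j / (c + al * a * lam j)) - lam j / (c + a * lam j) /\
           (0 < lam j -> 0 < al * (lam j / (c + al * a * lam j)) - lam j / (c + a * lam j)).
  have l0 := lam0 j.
  have p1 : 0 < c + a * lam j by apply: ltr_wpDr => //; exact: mulr_ge0.
  have p2 : 0 < c + al * a * lam j.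
    by apply: ltr_wpDr => //; apply: mulr_ge0 => //; apply: mulr_ge0 => //; exact: ltW.
  have e : al * (lam j / (c + al * a * lam j)) - lam j / (c + a * lam j) =
     lam j * ((al - 1) * c) / ((c + a * lam j) * (c + al * a * lam j)).
    by field; rewrite !gt_eqF.
  have d0 : 0 < (c + a * lam j) * (c + al * a * lam j) by exact: mulr_gt0.
  have c1 : 0 < (al - 1) * c by apply: mulr_gt0 => //; lra.
  rewrite e; split; [|move=> lj]; [apply: divr_ge0 | apply: divr_gt0] => //.
  - by apply: mulr_ge0 => //; exact: ltW.
  - exact: ltW.
  - exact: mulr_gt0.
rewrite -subr_gt0 -sumrB (bigD1 i) //=.
apply: ltr_wpDr; first by apply: sumr_ge0 => j _; exact: (t j).1.
exact: (t i).2.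
Qed.

End Scal.

Section Fix.
Variable R : realType.
Variables (F1 F2 : R -> R -> R) (dM gM dm gm : R).
Hypothesis mono1 : forall d g d' g', 0 < d -> 0 < g -> 0 < d' -> 0 < g' ->
  d <= d' -> g' <= g -> F1 d g <= F1 d' g'.
Hypothesis mono2 : forall d g d' g', 0 < d -> 0 < g -> 0 < d' -> 0 < g' ->
  d <= d' -> g' <= g -> F2 d' g' <= F2 d g.
Hypothesis sc1 : forall d g al, 0 < d -> 0 < g -> 1 < al -> F1 (al * d) (g / al) < al * F1 d g.
Hypothesis sc2 : forall d g al, 0 < d -> 0 < g -> 1 < al -> F2 d g < al * F2 (al * d) (g / al).
Hypothesis pos1 : forall d g, 0 < d -> 0 < g -> 0 < F1 d g.
Hypothesis pos2 : forall d g, 0 < d -> 0 < g -> 0 < F2 d g.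
Hypothesis ub1 : forall d g, 0 < d -> 0 < g -> F1 d g <= dM.
Hypothesis ub2 : forall d g, 0 < d -> 0 < g -> F2 d g <= gM.
Hypothesis dm0 : 0 < dm.
Hypothesis gm0 : 0 < gm.
Hypothesis lb1 : forall d g, 0 < d -> 0 < g -> g <= gM -> dm <= F1 d g.
Hypothesis lb2 : forall d g, 0 < d -> 0 < g -> d <= dM -> gm <= F2 d g.

Lemma fix_half d1 g1 d2 g2 : 0 < d1 -> 0 < g1 -> 0 < d2 -> 0 < g2 ->
  F1 d1 g1 = d1 -> F2 d1 g1 = g1 -> F1 d2 g2 = d2 -> F2 d2 g2 = g2 ->
  d2 <= d1 /\ g1 <= g2.
Proof.
move=> p1 q1 p2 q2 f1 e1 f2 e2.
case: (boolP ((d2 <= d1) && (g1 <= g2))) => [/andP[] //|hn].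
set al := Num.max (d2 / d1) (g1 / g2).
have hal1 : 1 < al.
  move: hn; rewrite negb_and -!ltNge => /orP [h|h]; rewrite lt_max; apply/orP.
    by left; rewrite ltr_pdivlMr // mul1r.
  by right; rewrite ltr_pdivlMr // mul1r.
have al0 : 0 < al by exact: lt_trans hal1.
have hd : d2 <= al * d1.
  by rewrite -ler_pdivrMr // le_max lexx.
have hg : g1 / al <= g2.
  by rewrite ler_pdivrMr // mulrC -ler_pdivrMr // le_max lexx orbT.
have ad0 : 0 < al * d1 by exact: mulr_gt0.
have ag0 : 0 < g1 / al by exact: divr_gt0.
have A : d2 / d1 < al.
  rewrite ltr_pdivrMr //.
  have := sc1 p1 q1 hal1; rewrite f1 => h.
  rewrite -f2; apply: le_lt_trans h; exact: mono1.
have B : g1 / g2 < al.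
  rewrite ltr_pdivrMr //.
  have := sc2 p1 q1 hal1; rewrite e1 => h.
  apply: lt_le_trans h _; rewrite ler_pM2l // -[X in _ <= X]e2.
  exact: mono2.
have : al < al by rewrite {1}/al gt_max A B.
by rewrite ltxx.
Qed.

Lemma fix_unique d1 g1 d2 g2 : 0 < d1 -> 0 < g1 -> 0 < d2 -> 0 < g2 ->
  F1 d1 g1 = d1 -> F2 d1 g1 = g1 -> F1 d2 g2 = d2 -> F2 d2 g2 = g2 ->
  d2 = d1 /\ g2 = g1.
Proof.
move=> p1 q1 p2 q2 f1 e1 f2 e2.
have [a b] := fix_half p1 q1 p2 q2 f1 e1 f2 e2.
have [c d] := fix_half p2 q2 p1 q1 f2 e2 f1 e1.
by split; apply/eqP; rewrite eq_le ?a ?b ?c ?d.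
Qed.

Definition Fset d g := [/\ 0 < d, 0 < g, F1 d g <= d & g <= F2 d g].

Lemma fix_exists : exists d g, [/\ 0 < d, 0 < g, F1 d g = d & F2 d g = g].
Proof.
have dM0 : 0 < dM by apply: lt_le_trans (pos1 ltr01 ltr01) (ub1 ltr01 ltr01).
have Fel : Fset dM gm by split=> //; [exact: ub1 | exact: lb2].
have Flb d g : Fset d g -> dm <= d /\ g <= gM.
  case=> d0 g0 h1 h2; have g1 : g <= gM by exact: le_trans h2 (ub2 d0 g0).
  by split=> //; exact: le_trans (lb1 d0 g0 g1) h1.
pose D := [set x : R | exists d g, Fset d g /\ x = - d]%classic.
pose G := [set y : R | exists d, Fset d y]%classic.
have Dn : (D !=set0)%classic by exists (- dM); exists dM, gm.
have Gn : (G !=set0)%classic by exists gm; exists dM.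
have Dub : ubound D (- dm) by move=> x [d [g [hF ->]]]; rewrite lerN2; exact: (Flb _ _ hF).1.
have Gub : ubound G gM by move=> y [d hF]; exact: (Flb _ _ hF).2.
have Dh : has_ubound D by exists (- dm).
have Gh : has_ubound G by exists gM.
set ds := - sup D; set gs := sup G.
have dsl d g : Fset d g -> ds <= d.
  by move=> hF; rewrite /ds lerNl; apply: ub_le_sup => //; exists d, g.
have gsl d g : Fset d g -> g <= gs by move=> hF; apply: ub_le_sup => //; exists d.
have ds0 : 0 < ds by apply: lt_le_trans dm0 _; rewrite /ds lerNr; exact: ge_sup.
have gs0 : 0 < gs by apply: lt_le_trans gm0 _; exact: (gsl dM gm).
have s1 : F1 ds gs <= ds.
  rewrite /ds lerNr; apply: ge_sup => // x [d [g [hF ->]]]; rewrite lerN2.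
  case: (hF) => d0 g0 h1 _; apply: le_trans h1.
  by apply: mono1 => //; [exact: dsl hF | exact: gsl hF].
have s2 : gs <= F2 ds gs.
  apply: ge_sup => // y [d hF]; case: (hF) => d0 g0 _ h2; apply: le_trans h2 _.
  by apply: mono2 => //; [exact: dsl hF | exact: gsl hF].
have y1 := pos1 ds0 gs0; have y2 := pos2 ds0 gs0.
have hy : Fset (F1 ds gs) (F2 ds gs).
  split=> //; [apply: le_trans (mono1 _ _ _ _ s1 s2) _ => //|].
  exact: mono2.
exists ds, gs; split=> //; apply/eqP; rewrite eq_le.
  by rewrite s1 (dsl _ _ hy).
by rewrite s2 (gsl _ _ hy).
Qed.

End Fix.
Section Main.
Variable R : realType.
Local Notation C := (R[i]).
Local Open Scope complex_scope.

Lemma ReK (x : C) : 0 <= x -> (complex.Re x)%:C = x.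
Proof. by move=> x0; apply: RRe_real; exact: ger0_real. Qed.

Lemma Re_le (x y : C) : x <= y -> complex.Re x <= complex.Re y.
Proof. by rewrite lecE => /andP[]. Qed.

Lemma Re_gt0 (x : C) : 0 < x -> 0 < complex.Re x.
Proof. by rewrite ltcE => /andP[]. Qed.

Lemma Re_ge0 (x : C) : 0 <= x -> 0 <= complex.Re x.
Proof. by move/Re_le. Qed.

Lemma natC k : (k%:R : C) = (k%:R : R)%:C.
Proof. by rewrite rmorph_nat. Qed.

Variables (n l m : nat) (R1 : 'M[C]_n) (R2 T1 : 'M[C]_l) (T2 : 'M[C]_m) (z s : R).
Hypotheses (pR1 : psd R1) (pR2 : psd R2) (pT1 : psd T1) (pT2 : psd T2)
  (z0 : 0 < z) (s0 : 0 <= s) (l0 : (0 < l)%N) (m0 : (0 < m)%N)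
  (tR1 : 0 < \tr R1) (tT1 : 0 < \tr T1) (tRT : 0 < \tr (R2 *m T1)) (tT2 : 0 < \tr T2).

Let rl := (l%:R : R).
Let rm := (m%:R : R).
Let rl0 : 0 < rl. Proof. by rewrite /rl ltr0n. Qed.
Let rm0 : 0 < rm. Proof. by rewrite /rm ltr0n. Qed.

Let Bm := msqrt T1.
Let pBm : psd Bm. Proof. by have [] := msqrtP pT1. Qed.
Let BB : Bm *m Bm = T1. Proof. by have [] := msqrtP pT1. Qed.
Let S := Bm *m R2 *m Bm.
Let pS : psd S. Proof. by apply: psd_congr => //; case: pBm. Qed.
Let trS : \tr S = \tr (R2 *m T1).
Proof. by rewrite /S -mulmxA mxtrace_mulC -mulmxA BB. Qed.

Definition Gm d g := (s * d)%:C *: T1 + (d * g)%:C *: S.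
Definition Wm d g := invmx (1%:M + Gm d g).

Lemma pGm d g : 0 <= d -> 0 <= g -> psd (Gm d g).
Proof.
by move=> d0 g0; apply: psd_add; apply: psd_scale => //; rewrite ler0c; exact: mulr_ge0.
Qed.

Lemma Wm_prop d g : 0 <= d -> 0 <= g ->
  1%:M + Gm d g \in unitmx /\ psd (Wm d g) /\ pdef (Wm d g).
Proof. by move=> d0 g0; exact: (@inv_cG _ _ 1 (Gm d g) ltr01 (pGm d0 g0)). Qed.

Lemma trKW_ge0 K d g : psd K -> 0 <= d -> 0 <= g -> 0 <= \tr (K *m Wm d g).
Proof.
move=> hK d0 g0; have [_ [[_ h] _]] := Wm_prop d0 g0; exact: tr_psd.
Qed.

Lemma trKW_gt0 K d g : psd K -> 0 < \tr K -> 0 <= d -> 0 <= g -> 0 < \tr (K *m Wm d g).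
Proof.
move=> hK tK d0 g0; have [_ [_ h]] := Wm_prop d0 g0; exact: tr_psd_gt0.
Qed.

Lemma GmB d g d' g' : Gm d' g' - Gm d g =
  (s * d' - s * d)%:C *: T1 + (d' * g' - d * g)%:C *: S.
Proof. by rewrite /Gm opprD addrACA !rmorphB !scalerBl. Qed.

Lemma monoK K d g d' g' : psd K -> 0 <= d -> 0 <= g -> 0 <= d' -> 0 <= g' ->
  s * d <= s * d' -> d * g <= d' * g' ->
  complex.Re (\tr (K *m Wm d' g')) <= complex.Re (\tr (K *m Wm d g)).
Proof.
move=> hK d0 g0 d'0 g'0 h1 h2; apply: Re_le.
apply: (mono ltr01 ltr01 (pGm d0 g0) (pGm d'0 g'0) _ hK).
have -> : 1%:M + Gm d' g' - (1%:M + Gm d g) = Gm d' g' - Gm d g.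
  by rewrite opprD addrACA subrr add0r.
rewrite GmB; have [] : psd ((s * d' - s * d)%:C *: T1 + (d' * g' - d * g)%:C *: S).
  by apply: psd_add; apply: psd_scale => //; rewrite ler0c subr_ge0.
by [].
Qed.

Definition ob d g := complex.Re (\tr (T1 *m Wm d g)) / rl.
Definition ou d g := complex.Re (\tr (S *m Wm d g)) / rl.
Definition tw d g := complex.Re (\tr (1%:M *m Wm d g)) / rl.

Lemma ob_ge0 d g : 0 <= d -> 0 <= g -> 0 <= ob d g.
Proof. by move=> d0 g0; apply: divr_ge0 (ltW rl0); apply: Re_ge0; exact: trKW_ge0. Qed.
Lemma ou_ge0 d g : 0 <= d -> 0 <= g -> 0 <= ou d g.
Proof. by move=> d0 g0; apply: divr_ge0 (ltW rl0); apply: Re_ge0; exact: trKW_ge0. Qed.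
Lemma ob_gt0 d g : 0 <= d -> 0 <= g -> 0 < ob d g.
Proof. by move=> d0 g0; apply: divr_gt0 rl0; apply: Re_gt0; exact: trKW_gt0. Qed.
Lemma ou_gt0 d g : 0 <= d -> 0 <= g -> 0 < ou d g.
Proof. by move=> d0 g0; apply: divr_gt0 rl0; apply: Re_gt0; apply: trKW_gt0; rewrite ?trS. Qed.

Lemma Wm00 : Wm 0 0 = 1%:M.
Proof. by rewrite /Wm /Gm mulr0 mul0r rmorph0 !scale0r !addr0 invmx1. Qed.

Lemma P3 d g : 0 <= d -> 0 <= g -> d * (s * ob d g + g * ou d g) = 1 - tw d g.
Proof.
move=> d0 g0; have [u _] := Wm_prop d0 g0.
have e : \tr (Gm d g *m Wm d g) = l%:R - \tr (1%:M *m Wm d g).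
  have h : 1%:M *m Wm d g + Gm d g *m Wm d g = 1%:M by rewrite -mulmxDl mulmxV.
  have := congr1 mxtrace h; rewrite raddfD /= mxtrace1 => <-.
  by rewrite addrAC subrr add0r.
move: e; rewrite /Gm mulmxDl -!scalemxAl raddfD /= !mxtraceZ.
rewrite -(ReK (trKW_ge0 pT1 d0 g0)) -(ReK (trKW_ge0 pS d0 g0)).
rewrite -(ReK (trKW_ge0 (psd1 _ _) d0 g0)) natC -!rmorphM -!rmorphD -rmorphB.
move/complexI; rewrite /ob /ou /tw -/rl => e.
have rn : rl != 0 by rewrite gt_eqF.
set t1 := complex.Re _ in e *; set t2 := complex.Re _ in e *; set t0 := complex.Re _ in e *.
have -> : d * (s * (t1 / rl) + g * (t2 / rl)) = (s * d * t1 + d * g * t2) / rl by field.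
by rewrite e; field.
Qed.

Lemma ltr0c' (k : R) : (0 < k%:C) = (0 < k).
Proof. by rewrite ltcE /= eqxx. Qed.

Lemma ReK' (x : C) : 0 <= x -> real_complex R (complex.Re x) = x.
Proof. exact: ReK. Qed.

Definition lam i := complex.Re (spectral_diag R1 0 i).
Definition mu j := complex.Re (spectral_diag T2 0 j).

Lemma lam0 i : 0 <= lam i.
Proof. by apply: Re_ge0; exact: (psd_spec pR1).2. Qed.
Lemma mu0 j : 0 <= mu j.
Proof. by apply: Re_ge0; exact: (psd_spec pT2).2. Qed.

Lemma lampos : exists i, 0 < lam i.
Proof.
have : \sum_i spectral_diag R1 0 i != 0 by rewrite -tr_spec // gt_eqF.
move/eqP/psumr_neq0P => [i _|i /andP[_ h]]; first exact: (psd_spec pR1).2.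
by exists i; exact: Re_gt0.
Qed.
Lemma mupos : exists j, 0 < mu j.
Proof.
have : \sum_i spectral_diag T2 0 i != 0 by rewrite -tr_spec // gt_eqF.
move/eqP/psumr_neq0P => [i _|i /andP[_ h]]; first exact: (psd_spec pT2).2.
by exists i; exact: Re_gt0.
Qed.

Definition g1 a := hs lam z a / rl.
Definition g2 e := hs mu 1 e / rm.

Lemma g1_link a : 0 <= a ->
  (l%:R : C)^-1 * \tr (R1 *m invmx (z%:C%:M + a%:C *: R1)) = (g1 a)%:C.
Proof.
move=> a0; rewrite (tr_res pR1) ?ltr0c' ?ler0c //.
rewrite (eq_bigr (fun i => (lam i / (z + a * lam i))%:C)); last first.
  move=> i _; rewrite -{1 2}(ReK ((psd_spec pR1).2 i)).
  by rewrite fmorph_div rmorphD rmorphM.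
by rewrite -rmorph_sum natC -fmorphV -rmorphM mulrC.
Qed.

Lemma g2_link e : 0 <= e ->
  (m%:R : C)^-1 * \tr (T2 *m invmx (1%:M + e%:C *: T2)) = (g2 e)%:C.
Proof.
move=> e0; rewrite (tr_res pT2) ?ltr01 ?ler0c //.
rewrite (eq_bigr (fun i => (mu i / (1 + e * mu i))%:C)); last first.
  move=> i _; rewrite -{1 2}(ReK ((psd_spec pT2).2 i)).
  by rewrite fmorph_div rmorphD rmorphM rmorph1.
by rewrite -rmorph_sum natC -fmorphV -rmorphM mulrC.
Qed.

Definition Q d g := invmx (1%:M + (s * d)%:C *: T1 + (d * g)%:C *: (R2 *m T1)).

Lemma Q_link d g : 0 <= d -> 0 <= g ->
  \tr (T1 *m Q d g) = \tr (T1 *m Wm d g) /\ \tr (R2 *m T1 *m Q d g) = \tr (S *m Wm d g).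
Proof.
move=> d0 g0; set P := (s * d)%:C%:M + (d * g)%:C *: R2.
have e1 : 1%:M + (s * d)%:C *: T1 + (d * g)%:C *: (R2 *m T1) = 1%:M + P *m (Bm *m Bm).
  by rewrite BB /P mulmxDl mul_scalar_mx -scalemxAl addrA.
have e2 : Bm *m P *m Bm = Gm d g.
  rewrite /P /Gm mulmxDr mulmxDl mul_mx_scalar -scalemxAl BB.
  by rewrite -scalemxAr -scalemxAl.
have [u _] := Wm_prop d0 g0; rewrite -e2 in u.
have [_ tr] := transfer u.
rewrite /Q e1; split.
  rewrite -{1}BB tr e2 -/(Wm d g).
  by rewrite tr_cyc2 BB.
rewrite -mulmxA -{1}BB tr e2 -/(Wm d g).
by rewrite tr_cyc.
Qed.

Definition aa d g := s * ob d g + g * ou d g.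
Definition F1 d g := g1 (aa d g).
Definition F2 d g := g2 (rl / rm * d * ou d g).

Lemma aa_ge0 d g : 0 <= d -> 0 <= g -> 0 <= aa d g.
Proof. by move=> d0 g0; apply: addr_ge0; apply: mulr_ge0 => //; [exact: ob_ge0 | exact: ou_ge0]. Qed.

Lemma g1_mono a a' : 0 <= a -> a <= a' -> g1 a' <= g1 a.
Proof. by move=> a0 aa'; rewrite /g1 ler_pM2r ?invr_gt0 //; apply: (hs_mono lam0). Qed.
Lemma g2_mono a a' : 0 <= a -> a <= a' -> g2 a' <= g2 a.
Proof. by move=> a0 aa'; rewrite /g2 ler_pM2r ?invr_gt0 //; apply: (hs_mono mu0) => //; exact: ltr01. Qed.
Lemma g1_pos a : 0 <= a -> 0 < g1 a.
Proof. by move=> a0; apply: divr_gt0 => //; exact: (hs_pos lam0 lampos z0 a0). Qed.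
Lemma g2_pos a : 0 <= a -> 0 < g2 a.
Proof. by move=> a0; apply: divr_gt0 => //; exact: (hs_pos mu0 mupos ltr01 a0). Qed.
Lemma g1_sc a al : 0 <= a -> 1 < al -> g1 (a / al) < al * g1 a.
Proof.
move=> a0 al1; rewrite /g1 mulrA ltr_pM2r ?invr_gt0 //.
exact: (hs_scal1 lam0 lampos z0 a0 al1).
Qed.
Lemma g2_sc a al : 0 <= a -> 1 < al -> g2 a < al * g2 (al * a).
Proof.
move=> a0 al1; rewrite /g2 mulrA ltr_pM2r ?invr_gt0 //.
exact: (hs_scal2 mu0 mupos ltr01 a0 al1).
Qed.

Lemma ob_mono d g d' g' : 0 <= d -> 0 <= g -> 0 <= d' -> 0 <= g' ->
  s * d <= s * d' -> d * g <= d' * g' -> ob d' g' <= ob d g.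
Proof. move=> d0 g0 d'0 g'0 h1 h2; rewrite /ob ler_pM2r; last by rewrite invr_gt0.
exact: (monoK pT1 d0 g0 d'0 g'0 h1 h2). Qed.
Lemma ou_mono d g d' g' : 0 <= d -> 0 <= g -> 0 <= d' -> 0 <= g' ->
  s * d <= s * d' -> d * g <= d' * g' -> ou d' g' <= ou d g.
Proof. move=> d0 g0 d'0 g'0 h1 h2; rewrite /ou ler_pM2r; last by rewrite invr_gt0.
exact: (monoK pS d0 g0 d'0 g'0 h1 h2). Qed.
Lemma tw_mono d g d' g' : 0 <= d -> 0 <= g -> 0 <= d' -> 0 <= g' ->
  s * d <= s * d' -> d * g <= d' * g' -> tw d' g' <= tw d g.
Proof. move=> d0 g0 d'0 g'0 h1 h2; rewrite /tw ler_pM2r; last by rewrite invr_gt0.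
exact: (monoK (psd1 _ _) d0 g0 d'0 g'0 h1 h2). Qed.

Lemma lin_step (d X Y t1 t2 : R) : 0 < d -> d * X = 1 - t1 -> d * Y = 1 - t2 -> t2 <= t1 -> X <= Y.
Proof. by move=> d0 e1 e2 t; rewrite -(ler_pM2l d0) e1 e2 lerD2l lerN2. Qed.

Lemma aa_incr d g g' : 0 < d -> 0 <= g -> g <= g' -> aa d g <= aa d g'.
Proof.
move=> d0 g0 gg; have g'0 := le_trans g0 gg; have d0' := ltW d0.
apply: (lin_step d0 (P3 d0' g0) (P3 d0' g'0)).
exact: (tw_mono d0' g0 d0' g'0 (lexx _) (ler_wpM2l d0' gg)).
Qed.

Lemma aa_decr d d' g : 0 <= d -> d <= d' -> 0 <= g -> aa d' g <= aa d g.
Proof.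
move=> d0 dd g0; have d'0 := le_trans d0 dd.
rewrite /aa; apply: (lerD (ler_wpM2l s0 _) (ler_wpM2l g0 _)).
  exact: (ob_mono d0 g0 d'0 g0 (ler_wpM2l s0 dd) (ler_wpM2r g0 dd)).
exact: (ou_mono d0 g0 d'0 g0 (ler_wpM2l s0 dd) (ler_wpM2r g0 dd)).
Qed.

Lemma Re_mulC (k : R) (x : C) : complex.Re (k%:C * x) = k * complex.Re x.
Proof. by case: x => a b; rewrite /= mul0r subr0. Qed.

Lemma scal_div (d d' x x' : R) : d * x <= d' * x' -> d * (x / rl) <= d' * (x' / rl).
Proof. by move=> h; rewrite !mulrA ler_pM2r // invr_gt0. Qed.

Lemma dou_incr d d' g : 0 < d -> d <= d' -> 0 <= g -> d * ou d g <= d' * ou d' g.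
Proof.
move=> d0 dd g0; have d'0 : 0 < d' := lt_le_trans d0 dd.
set H := s%:C *: T1 + g%:C *: S.
have pH : psd H by apply: psd_add; apply: psd_scale; rewrite ?ler0c.
have eG x : Gm x g = x%:C *: H.
  by rewrite /Gm /H scalerDr !scalerA -!rmorphM (mulrC s x).
have key x : 0 < x -> x%:C * \tr (S *m Wm x g) = \tr (S *m invmx ((x%:C)^-1%:M + H)).
  move=> x0; have [u _] := Wm_prop (ltW x0) g0.
  rewrite -mxtraceZ scalemxAr /Wm eG; rewrite eG in u.
  have xn : x%:C != 0 by rewrite gt_eqF // ltr0c'.
  by rewrite (inv_scale xn u).
apply: scal_div; rewrite /ou -!Re_mulC; apply: Re_le; rewrite !key //.
have c0 : 0 < (d'%:C)^-1 by rewrite invr_gt0 ltr0c'.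
have c'0 : 0 < (d%:C)^-1 by rewrite invr_gt0 ltr0c'.
apply: (mono c0 c'0 pH pH _ pS).
have -> : (d%:C)^-1%:M + H - ((d'%:C)^-1%:M + H) = ((d%:C)^-1 - (d'%:C)^-1)%:M.
  by rewrite opprD addrACA subrr addr0 raddfB.
apply: nneg_scalar; rewrite -!fmorphV -rmorphB ler0c subr_ge0.
by rewrite lef_pV2 // posrE.
Qed.

Lemma sc_step (d al a a' t t' : R) : 0 < d -> 0 < al ->
  (al * d) * a' = 1 - t' -> d * a = 1 - t -> t' <= t -> a / al <= a'.
Proof.
move=> d0 al0 e1 e2 tt; rewrite ler_pdivrMr // -(ler_pM2l d0).
have -> : d * (a' * al) = al * d * a' by ring.
by rewrite e1 e2 lerD2l lerN2.
Qed.

Lemma sc_step2 (k al d o o' : R) : 0 <= k -> 0 <= al -> 0 <= d -> o' <= o ->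
  k * (al * d) * o' <= al * (k * d * o).
Proof.
move=> k0 al0 d0 oo.
have -> : al * (k * d * o) = k * (al * d) * o by ring.
by apply: ler_wpM2l => //; apply: mulr_ge0 => //; exact: mulr_ge0.
Qed.

Lemma F1_sc d g al : 0 < d -> 0 < g -> 1 < al -> F1 (al * d) (g / al) < al * F1 d g.
Proof.
move=> d0 g0 al1; have al0 : 0 < al := lt_trans ltr01 al1.
have ad0 : 0 <= al * d by apply: mulr_ge0; exact: ltW.
have ga0 : 0 <= g / al by apply: divr_ge0; exact: ltW.
have h : aa d g / al <= aa (al * d) (g / al).
  apply: (sc_step d0 al0 (P3 ad0 ga0) (P3 (ltW d0) (ltW g0))).
  apply: (tw_mono (ltW d0) (ltW g0) ad0 ga0).
    by apply: ler_wpM2l => //; rewrite ler_peMl // ltW.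
  by rewrite le_eqVlt; apply/orP; left; apply/eqP; field; rewrite gt_eqF.
have hs := g1_sc (aa_ge0 (ltW d0) (ltW g0)) al1.
have a0 : 0 <= aa d g / al by apply: divr_ge0 (ltW al0); exact: aa_ge0 (ltW d0) (ltW g0).
have hm := g1_mono a0 h.
rewrite /F1; exact: le_lt_trans hm hs.
Qed.

Lemma F2_sc d g al : 0 < d -> 0 < g -> 1 < al -> F2 d g < al * F2 (al * d) (g / al).
Proof.
move=> d0 g0 al1; have al0 : 0 < al := lt_trans ltr01 al1.
have ad0 : 0 <= al * d by apply: mulr_ge0; exact: ltW.
have ga0 : 0 <= g / al by apply: divr_ge0; exact: ltW.
have k0 : 0 <= rl / rm by apply: divr_ge0; exact: ltW.
have b0 : 0 <= rl / rm * d * ou d g.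
  by apply: mulr_ge0; [apply: mulr_ge0 => //; exact: ltW | exact: ou_ge0 (ltW d0) (ltW g0)].
have h : rl / rm * (al * d) * ou (al * d) (g / al) <= al * (rl / rm * d * ou d g).
  apply: (sc_step2 k0 (ltW al0) (ltW d0)).
  apply: (ou_mono (ltW d0) (ltW g0) ad0 ga0).
    by apply: ler_wpM2l => //; rewrite ler_peMl // ltW.
  by rewrite le_eqVlt; apply/orP; left; apply/eqP; field; rewrite gt_eqF.
have hs := g2_sc b0 al1.
have b'0 : 0 <= rl / rm * (al * d) * ou (al * d) (g / al).
  by apply: mulr_ge0; [apply: mulr_ge0 | exact: ou_ge0 ad0 ga0].
have hm := g2_mono b'0 h.
rewrite /F2; apply: lt_le_trans hs _; rewrite ler_pM2l; [exact: hm | exact: al0].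
Qed.

Definition obM := complex.Re (\tr T1) / rl.
Definition ouM := complex.Re (\tr S) / rl.

Lemma ob00 : ob 0 0 = obM. Proof. by rewrite /ob Wm00 mulmx1. Qed.
Lemma ou00 : ou 0 0 = ouM. Proof. by rewrite /ou Wm00 mulmx1. Qed.

Lemma ob_le d g : 0 <= d -> 0 <= g -> ob d g <= obM.
Proof.
move=> d0 g0; rewrite -ob00.
apply: (ob_mono (lexx 0) (lexx 0) d0 g0); rewrite ?mulr0 ?mul0r.
  exact: mulr_ge0. exact: mulr_ge0.
Qed.
Lemma ou_le d g : 0 <= d -> 0 <= g -> ou d g <= ouM.
Proof.
move=> d0 g0; rewrite -ou00.
apply: (ou_mono (lexx 0) (lexx 0) d0 g0); rewrite ?mulr0 ?mul0r.
  exact: mulr_ge0. exact: mulr_ge0.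
Qed.
Lemma obM0 : 0 <= obM. Proof. by rewrite -ob00; apply: ob_ge0; exact: lexx. Qed.
Lemma ouM0 : 0 <= ouM. Proof. by rewrite -ou00; apply: ou_ge0; exact: lexx. Qed.

Lemma kstep (k d d' x y : R) : 0 <= k -> d * x <= d' * y -> k * d * x <= k * d' * y.
Proof. by move=> k0 h; rewrite -!mulrA ler_wpM2l. Qed.

Lemma b_ge0 d g : 0 <= d -> 0 <= g -> 0 <= rl / rm * d * ou d g.
Proof.
move=> d0 g0; apply: mulr_ge0; last exact: ou_ge0.
by apply: mulr_ge0 => //; apply: divr_ge0; exact: ltW.
Qed.

Lemma H_mono1 d g d' g' : 0 < d -> 0 < g -> 0 < d' -> 0 < g' ->
  d <= d' -> g' <= g -> F1 d g <= F1 d' g'.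
Proof.
move=> d0 g0 d'0 g'0 dd gg; rewrite /F1.
apply: (g1_mono (aa_ge0 (ltW d'0) (ltW g'0))).
exact: le_trans (aa_incr d'0 (ltW g'0) gg) (aa_decr (ltW d0) dd (ltW g0)).
Qed.

Lemma H_mono2 d g d' g' : 0 < d -> 0 < g -> 0 < d' -> 0 < g' ->
  d <= d' -> g' <= g -> F2 d' g' <= F2 d g.
Proof.
move=> d0 g0 d'0 g'0 dd gg; rewrite /F2.
apply: (g2_mono (b_ge0 (ltW d0) (ltW g0))).
have k0 : 0 <= rl / rm by apply: divr_ge0; exact: ltW.
apply: (kstep k0); apply: le_trans (dou_incr d0 dd (ltW g0)) _.
apply: ler_wpM2l; first exact: ltW.
apply: (ou_mono (ltW d'0) (ltW g'0) (ltW d'0) (ltW g0) (lexx _)).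
by apply: ler_wpM2l; [exact: ltW | exact: gg].
Qed.

Lemma H_pos1 d g : 0 < d -> 0 < g -> 0 < F1 d g.
Proof. by move=> d0 g0; apply: g1_pos; exact: aa_ge0 (ltW d0) (ltW g0). Qed.
Lemma H_pos2 d g : 0 < d -> 0 < g -> 0 < F2 d g.
Proof. by move=> d0 g0; apply: g2_pos; exact: b_ge0 (ltW d0) (ltW g0). Qed.
Lemma H_ub1 d g : 0 < d -> 0 < g -> F1 d g <= g1 0.
Proof. by move=> d0 g0; apply: (g1_mono (lexx 0)); exact: aa_ge0 (ltW d0) (ltW g0). Qed.
Lemma H_ub2 d g : 0 < d -> 0 < g -> F2 d g <= g2 0.
Proof. by move=> d0 g0; apply: (g2_mono (lexx 0)); exact: b_ge0 (ltW d0) (ltW g0). Qed.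

Lemma gM0 : 0 <= g2 0. Proof. exact: ltW (g2_pos (lexx 0)). Qed.

Lemma H_dm0 : 0 < g1 (s * obM + g2 0 * ouM).
Proof. by apply: g1_pos; apply: addr_ge0; apply: mulr_ge0; rewrite ?obM0 ?ouM0 ?gM0. Qed.
Lemma H_gm0 : 0 < g2 (rl / rm * g1 0 * ouM).
Proof.
apply: g2_pos; apply: mulr_ge0; last exact: ouM0.
apply: mulr_ge0; [apply: divr_ge0; exact: ltW | exact: ltW (g1_pos (lexx 0))].
Qed.

Lemma H_lb1 d g : 0 < d -> 0 < g -> g <= g2 0 -> g1 (s * obM + g2 0 * ouM) <= F1 d g.
Proof.
move=> d0 g0 gg; rewrite /F1.
apply: (g1_mono (aa_ge0 (ltW d0) (ltW g0))).
rewrite /aa; apply: lerD; first exact: (ler_wpM2l s0 (ob_le (ltW d0) (ltW g0))).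
apply: le_trans (ler_wpM2l (ltW g0) (ou_le (ltW d0) (ltW g0))) _.
by apply: ler_wpM2r; [exact: ouM0 | exact: gg].
Qed.

Lemma H_lb2 d g : 0 < d -> 0 < g -> d <= g1 0 -> g2 (rl / rm * g1 0 * ouM) <= F2 d g.
Proof.
move=> d0 g0 dd; rewrite /F2.
apply: (g2_mono (b_ge0 (ltW d0) (ltW g0))).
have k0 : 0 <= rl / rm by apply: divr_ge0; exact: ltW.
apply: (kstep k0).
exact: ler_pM (ltW d0) (ou_ge0 (ltW d0) (ltW g0)) dd (ou_le (ltW d0) (ltW g0)).
Qed.

Lemma fix_ex : exists d g, [/\ 0 < d, 0 < g, F1 d g = d & F2 d g = g].
Proof.
exact: (fix_exists H_mono1 H_mono2 H_pos1 H_pos2 H_ub1 H_ub2 H_dm0 H_gm0 H_lb1 H_lb2).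
Qed.

Lemma fix_un d1 g1 d2 g2 : 0 < d1 -> 0 < g1 -> 0 < d2 -> 0 < g2 ->
  F1 d1 g1 = d1 -> F2 d1 g1 = g1 -> F1 d2 g2 = d2 -> F2 d2 g2 = g2 -> d2 = d1 /\ g2 = g1.
Proof. exact: (fix_unique H_mono1 H_mono2 F1_sc F2_sc). Qed.

Lemma ob_link d g : 0 <= d -> 0 <= g -> (l%:R : C)^-1 * \tr (T1 *m Wm d g) = (ob d g)%:C.
Proof.
move=> d0 g0; rewrite -(ReK (trKW_ge0 pT1 d0 g0)) natC -fmorphV -rmorphM mulrC.
by [].
Qed.

Lemma ou_link d g : 0 <= d -> 0 <= g -> (l%:R : C)^-1 * \tr (S *m Wm d g) = (ou d g)%:C.
Proof.
move=> d0 g0; rewrite -(ReK (trKW_ge0 pS d0 g0)) natC -fmorphV -rmorphM mulrC.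
by [].
Qed.

Lemma sol_of d g : 0 <= d -> 0 <= g -> F1 d g = d -> F2 d g = g ->
  is_solution R1 R2 T1 T2 z s d (ob d g) (ou d g) g.
Proof.
move=> d0 g0 f1 f2; have [q1 q2] := Q_link d0 g0.
have h1 := g1_link (aa_ge0 d0 g0); rewrite /aa in h1.
have h4 := g2_link (b_ge0 d0 g0).
have f1' : g1 (s * ob d g + g * ou d g) = d := f1.
have f2' : g2 (rl / rm * d * ou d g) = g := f2.
rewrite /is_solution; split.
- by rewrite h1 f1'.
- by rewrite q1 ob_link.
- by rewrite q2 ou_link.
- by rewrite h4 f2'.
Qed.

Lemma sol_to d ob' ou' g : 0 < d -> 0 < g ->
  is_solution R1 R2 T1 T2 z s d ob' ou' g ->
  [/\ ob' = ob d g, ou' = ou d g, F1 d g = d & F2 d g = g].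
Proof.
move=> d0 g0; have [q1 q2] := Q_link (ltW d0) (ltW g0).
rewrite /is_solution; case=> e1 e2 e3 e4.
rewrite q1 (ob_link (ltW d0) (ltW g0)) in e2.
rewrite q2 (ou_link (ltW d0) (ltW g0)) in e3.
have E2 := complexI e2; have E3 := complexI e3.
subst ob' ou'.
have h1 := g1_link (aa_ge0 (ltW d0) (ltW g0)); rewrite /aa in h1.
have h4 := g2_link (b_ge0 (ltW d0) (ltW g0)).
rewrite h1 in e1; rewrite h4 in e4.
by split=> //; apply/esym; apply: complexI.
Qed.

Lemma main_sec : exists d omb omu g,
  [/\ 0 < d, 0 < omb, 0 < omu & 0 < g] /\
  is_solution R1 R2 T1 T2 z s d omb omu g /\
  forall d' omb' omu' g',
    [/\ 0 < d', 0 < omb', 0 < omu' & 0 < g'] ->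
    is_solution R1 R2 T1 T2 z s d' omb' omu' g' ->
    [/\ d' = d, omb' = omb, omu' = omu & g' = g].
Proof.
have [d [g [d0 g0 f1 f2]]] := fix_ex.
exists d, (ob d g), (ou d g), g; split.
  by split=> //; [exact: ob_gt0 (ltW d0) (ltW g0) | exact: ou_gt0 (ltW d0) (ltW g0)].
split; first exact: sol_of (ltW d0) (ltW g0) f1 f2.
move=> d' ob' ou' g' [d'0 ob'0 ou'0 g'0] hs.
have [E2 E3 F1' F2'] := sol_to d'0 g'0 hs.
have [Ed Eg] := fix_un d0 g0 d'0 g'0 f1 f2 F1' F2'.
by subst d' g'; split.
Qed.

End Main.

Lemma adjE (R : realType) m n (A : 'M[R[i]]_(m, n)) : adjmx A = A ^t*.
Proof. by apply/matrixP => i j; rewrite !mxE. Qed.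

Lemma hpsd_psd (R : realType) k (A : 'M[R[i]]_k) : hermitian_psd A -> psd A.
Proof. by case=> h1 h2; split; [rewrite /herm -adjE | move=> x; rewrite /qf -!adjE]. Qed.

Lemma tr_pos (R : realType) k (t : R[i]) (l : R) : 0 < l -> (0 < k)%N ->
  (l%:C <= (k%:R)^-1 * t)%C -> 0 < t.
Proof.
move=> l0 k0 h; have x0 : 0 < (k%:R)^-1 * t := lt_le_trans (eqbRL (ltr0c' _) l0) h.
have kn : (k%:R : R[i]) != 0 by rewrite pnatr_eq0 -lt0n.
rewrite -(mulVKf kn t); apply: mulr_gt0 x0; by rewrite ltr0n.
Qed.

Local Close Scope sesquilinear_scope.
Unset Implicit Arguments.
Theorem proposition1 (R : realType)
  (L M : nat -> nat)
  (R1 : forall N : nat, 'M[R[i]]_N)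
  (R2 T1 : forall N : nat, 'M[R[i]]_(L N))
  (T2 : forall N : nat, 'M[R[i]]_(M N))
  (r l : R)
  (* N, L(N), M(N) are positive integers *)
  (HLpos : forall N, (0 < N)%N -> (0 < L N)%N)
  (HMpos : forall N, (0 < N)%N -> (0 < M N)%N)
  (* Hermitian positive semidefinite *)
  (HR1 : forall N, hermitian_psd (R1 N))
  (HR2 : forall N, hermitian_psd (R2 N))
  (HT1 : forall N, hermitian_psd (T1 N))
  (HT2 : forall N, hermitian_psd (T2 N))
  (* (A.1): limsup M/N < oo, 0 < liminf L/N, limsup L/N < oo *)
  (HA1M : exists C : R, exists N0 : nat, forall N, (N0 <= N)%N -> (0 < N)%N ->
            (M N)%:R / N%:R <= C)
  (HA1L : exists c C : R, 0 < c /\ exists N0 : nat, forall N, (N0 <= N)%N -> (0 < N)%N ->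
            c <= (L N)%:R / N%:R <= C)
  (* (A.2) *)
  (Hr : forall N, (0 < N)%N ->
     Num.max (Num.max (specnorm (R1 N)) (specnorm (R2 N)))
             (Num.max (specnorm (T1 N)) (specnorm (T2 N))) <= r)
  (* (A.3) *)
  (hl : 0 < l)
  (Hl : forall N, (0 < N)%N ->
     [/\ (l%:C <= ((L N)%:R)^-1 * \tr (R2 N *m T1 N))%C,
         (l%:C <= (N%:R)^-1 * \tr (R1 N))%C,
         (l%:C <= ((L N)%:R)^-1 * \tr (R2 N))%C,
         (l%:C <= ((L N)%:R)^-1 * \tr (T1 N))%C
       & (l%:C <= ((M N)%:R)^-1 * \tr (T2 N))%C]) :
  forall N : nat, (0 < N)%N ->
  forall z sb : R, 0 < z -> 0 <= sb ->
  exists delta omb omu gam : R,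
    [/\ 0 < delta, 0 < omb, 0 < omu & 0 < gam] /\
    is_solution (R1 N) (R2 N) (T1 N) (T2 N) z sb delta omb omu gam /\
    forall delta' omb' omu' gam' : R,
      [/\ 0 < delta', 0 < omb', 0 < omu' & 0 < gam'] ->
      is_solution (R1 N) (R2 N) (T1 N) (T2 N) z sb delta' omb' omu' gam' ->
      [/\ delta' = delta, omb' = omb, omu' = omu & gam' = gam].
Proof.
move=> N N0 z sb z0 sb0.
have [h1 h2 h3 h4 h5] := Hl N N0.
exact: (main_sec (hpsd_psd (HR1 N)) (hpsd_psd (HR2 N)) (hpsd_psd (HT1 N)) (hpsd_psd (HT2 N))
  z0 sb0 (HLpos N N0) (HMpos N N0) (tr_pos hl N0 h2) (tr_pos hl (HLpos N N0) h4)
  (tr_pos hl (HLpos N N0) h1) (tr_pos hl (HMpos N N0) h5)).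
Qed.
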